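(* Let $F=\breve F(\alpha_1,\dots,\alpha_t)$ be a fence. Every statistic in \[ \operatorname{Span}_{\mathbb R}\Big(\bigcup_{i=1}^t\bigcup_{j=1}^{\beta_i}\{\alpha_i\hat\chi_{(i,j)}-j\hat\chi_p-(\alpha_i-j)\hat\chi_v : p\text{ the peak of }S_i,\ v\text{ the valley of }S_i\}\Big) \] is homomesic under promotion $\mathrm{Pro}=\tau_{x_n}\circ\cdots\circ\tau_{x_1}$ acting on $\mathcal J(F)$.
   Context: Fences: let $\alpha=(\alpha_1,\dots,\alpha_t)$ be positive integers with $t\ge2$ and $\alpha_1,\alpha_t\ge2$. Put $a_0=0$, $a_i=\alpha_1+\dots+\alpha_i$, $n=a_t-1$. The fence $\breve F(\alpha)$ is the poset on $\{x_1,\dots,x_n\}$ whose cover relations are: for $1\le j\le n-1$ with $a_{i-1}\le j<a_i$, $x_j\lessdot x_{j+1}$ if $i$ is odd and $x_j\gtrdot x_{j+1}$ if $i$ is even. Segments: $S_1=\{x_j:1\le j\le a_1\}$, $S_i=\{x_j:a_{i-1}\le j\le a_i\}$ for $2\le i\le t-1$, $S_t=\{x_j:a_{t-1}\le j\le n\}$. Shared elements $x_{a_i}$ ($i\in[t-1]$) are peaks (cover two elements) for $i$ odd and valleys (covered by two elements) for $i$ even; the peak (valley) of $S_i$ is the shared element of $S_i$ that is a peak (valley), and the corresponding $\hat\chi$ is identically zero if none exists. $\breve S_i$ is the set of non-shared elements of $S_i$, $\beta_i=\alpha_i-1$, $s_{(i,j)}$ the $j$-th smallest element of $\breve S_i$,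 $\hat\chi_{(i,j)}=\hat\chi_{s_{(i,j)}}$, where $\hat\chi_q(I)=1$ if $q\in I$ and $0$ otherwise for order ideals $I\in\mathcal J(F)$. The toggle $\tau_q:\mathcal J(F)\to\mathcal J(F)$ adds $q$ to $I$ if $q\in\min(F\setminus I)$, removes $q$ if $q\in\max(I)$, and fixes $I$ otherwise; composition is applied right to left. A statistic is homomesic under a bijection if its average over every orbit is the same constant. *)

(* Defs.v *)
From mathcomp Require Import all_boot all_order all_algebra.
From mathcomp Require Import reals.
Set Implicit Arguments. Unset Strict Implicit. Unset Printing Implicit Defensive.
Import Order.TTheory GRing.Theory Num.Theory.

(* Conventions: alpha : seq nat is (alpha_1,...,alpha_t), t = size alpha,
   alpha_i = nth 0 alpha i.-1 (1-based).  The element x_j (1 <= j <= n) of the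
   fence is represented by the ordinal (j-1 : 'I_n), i.e. u : 'I_n is x_{u+1}. *)
Section Fence.
Variable alpha : seq nat.

Definition tt_ := size alpha.
Definition alp (i : nat) : nat := nth 0 alpha i.-1.
Definition aa (i : nat) : nat := \sum_(k < i) nth 0 alpha k.
Definition nn : nat := (aa tt_).-1.

(* x_j <. x_{j+1} : j lies in segment i (a_{i-1} <= j < a_i) with i odd *)
Definition upstep (j : nat) : bool :=
  [exists i : 'I_tt_.+1, [&& 0 < (i : nat), aa (i : nat).-1 <= j, j < aa i & odd i]].
(* x_j >. x_{j+1} : j lies in segment i with i even *)
Definition downstep (j : nat) : bool :=
  [exists i : 'I_tt_.+1, [&& 0 < (i : nat), aa (i : nat).-1 <= j, j < aa i & ~~ odd i]].

(* cover relation u <. v (u is covered by v) *)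
Definition covered (u v : 'I_nn) : bool :=
  ((v : nat) == u.+1) && upstep u.+1 || ((u : nat) == v.+1) && downstep v.+1.

Definition fle (u v : 'I_nn) : bool := connect covered u v.
Definition flt (u v : 'I_nn) : bool := (u != v) && fle u v.

Definition is_ideal (I : {set 'I_nn}) : bool :=
  [forall u, forall v, (fle u v && (v \in I)) ==> (u \in I)].

Definition toggle (q : 'I_nn) (I : {set 'I_nn}) : {set 'I_nn} :=
  if (q \notin I) && [forall u, flt u q ==> (u \in I)] then q |: I
  else if (q \in I) && [forall u, flt q u ==> (u \notin I)] then I :\ q
  else I.

Definition Pro (I : {set 'I_nn}) : {set 'I_nn} :=
  foldl (fun J q => toggle q J) I (enum 'I_nn).

Definition inS (i : nat) (u : 'I_nn) : bool :=
  let j := u.+1 in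
  if i == 1 then (1 <= j <= aa 1)
  else if i == tt_ then (aa tt_.-1 <= j <= nn)
  else (aa i.-1 <= j <= aa i).

Definition is_shared (u : 'I_nn) : bool :=
  [exists k : 'I_tt_, (0 < (k : nat)) && (u.+1 == aa k)].
Definition is_peak (u : 'I_nn) : bool :=
  [exists k : 'I_tt_, [&& 0 < (k : nat), u.+1 == aa k & odd k]].
Definition is_valley (u : 'I_nn) : bool :=
  [exists k : 'I_tt_, [&& 0 < (k : nat), u.+1 == aa k & ~~ odd k]].

Definition inbreveS (i : nat) (u : 'I_nn) : bool := inS i u && ~~ is_shared u.

Variable R : realType.

Definition chi (q : 'I_nn) (I : {set 'I_nn}) : R := (q \in I)%:R.

(* hat chi_(i,j) = hat chi_{s_(i,j)}, s_(i,j) the j-th smallest element of breve S_i,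
   i.e. the element of breve S_i with exactly j-1 elements of breve S_i below it *)
Definition chi_ij (i j : nat) (I : {set 'I_nn}) : R :=
  \sum_(u : 'I_nn | inbreveS i u &&
          (#|[set v | inbreveS i v & flt v u]| == j.-1)) chi u I.

Definition chi_peak (i : nat) (I : {set 'I_nn}) : R :=
  \sum_(u : 'I_nn | inS i u && is_peak u) chi u I.
Definition chi_valley (i : nat) (I : {set 'I_nn}) : R :=
  \sum_(u : 'I_nn | inS i u && is_valley u) chi u I.

Definition gen (i j : nat) (I : {set 'I_nn}) : R :=
  (alp i)%:R * chi_ij i j I - j%:R * chi_peak i I - (alp i - j)%N%:R * chi_valley i I.

Definition span_stat (c : nat -> nat -> R) (I : {set 'I_nn}) : R :=
  \sum_(1 <= i < tt_.+1) \sum_(1 <= j < (alp i).-1.+1) c i j * gen i j I.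

End Fence.

Definition homomesic (S : finType) (R : realType) (P : pred S) (T : S -> S)
  (f : S -> R) : Prop :=
  exists c : R, forall x, P x ->
    ((\sum_(y <- orbit T x) f y) / (size (orbit T x))%:R = c)%R.

(* Main.v *)
Require Import Defs.
From mathcomp Require Import all_boot all_order all_algebra.
From mathcomp Require Import reals.
From mathcomp Require Import zify lra.
Set Implicit Arguments. Unset Strict Implicit. Unset Printing Implicit Defensive.
Import Order.TTheory GRing.Theory Num.Theory.
Lemma traject_telescope (S : Type) (R : zmodType) (T : S -> S) (g : S -> R) n x :
  (\sum_(y <- traject T x n) (g (T y) - g y) = g (iter n T x) - g x)%R.
Proof.
elim: n x => [|n IH] x /=; first by rewrite big_nil subrr.
rewrite big_cons IH -iterSr /=. by rewrite addrC addrA subrK.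
Qed.

Lemma cobound_homomesic (S : finType) (R : realType) (P : pred S) (T : S -> S)
  (f g : S -> R) (C : R) :
  (forall x, P x -> P (T x)) -> {in P &, injective T} ->
  (forall x, P x -> f x = C + g (T x) - g x)%R -> homomesic P T f.
Proof.
move=> hP inj hf; exists C => x Px.
have cyc : fcycle T (orbit T x).
  by apply: (@cycle_orbit_in _ T P) => // y; apply: hP.
have hit : iter (order T x) T x = x by move/(orbitPcycle 0 4): cyc.
have inP : forall k, P (iter k T x) by elim=> [|k IH] //=; apply: hP.
have -> : (\sum_(y <- orbit T x) f y = \sum_(y <- orbit T x) (C + (g (T y) - g y)))%R.
  rewrite /orbit; apply: eq_big_seq => y /trajectP [k _ ->].
  by rewrite hf ?inP // addrA.
rewrite big_split /= {2}/orbit traject_telescope hit subrr addr0.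
rewrite big_const_seq count_predT size_orbit iter_addr_0 -[(C *+ _)%R]mulr_natr.
have o0 : ((order T x)%:R != 0 :> R)%R.
  rewrite pnatr_eq0 -lt0n -size_orbit; case: (orbit T x) (in_orbit T x) => //.
by rewrite mulfK.
Qed.

Section Toggles.
Variable alpha : seq nat.
Local Notation N := (nn alpha).
Local Notation T := ('I_N).
Implicit Types (I J : {set T}) (u v w q : T).

Lemma idealP I : reflect (forall u v, fle u v -> v \in I -> u \in I) (is_ideal I).
Proof.
apply: (iffP forallP) => [h u v luv vI | h u].
  by have /forallP/(_ v)/implyP := h u; apply; rewrite luv.
by apply/forallP => v; apply/implyP => /andP [luv vI]; exact: h luv vI.
Qed.

Lemma covered_neq u v : covered u v -> u != v.
Proof.
rewrite /covered => /orP [] /andP [/eqP e _]; apply/negP => /eqP uv; move: e;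
  rewrite uv; lia.
Qed.

Lemma covered_fle u v : covered u v -> fle u v.
Proof. by move=> h; apply: connect1. Qed.

Lemma flt_lastP u q : flt u q -> exists2 w, fle u w & covered w q.
Proof.
case/andP => nuq /connectP [p pth qe].
elim/last_ind: p pth qe => [|p y _] /=; first by move=> _ e; rewrite e eqxx in nuq.
rewrite rcons_path last_rcons => /andP [pth cy] ye; subst y.
exists (last u p) => //; apply/connectP; by exists p.
Qed.

Lemma flt_firstP q u : flt q u -> exists2 w, covered q w & fle w u.
Proof.
case/andP => nuq /connectP [[|y p] pth qe] /=; first by rewrite qe eqxx in nuq.
case/andP: pth => cy pth; exists y => //; apply/connectP; by exists p.
Qed.

Lemma flt_lower J q : is_ideal J ->
  [forall u, flt u q ==> (u \in J)] = [forall w, covered w q ==> (w \in J)].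
Proof.
move=> /idealP id; apply/forallP/forallP => h w; apply/implyP => hw.
  by have /implyP := h w; apply; rewrite /flt covered_fle // covered_neq.
case: (flt_lastP hw) => z lz cz.
have /implyP := h z => /(_ cz); exact: id.
Qed.

Lemma flt_upper J q : is_ideal J ->
  [forall u, flt q u ==> (u \notin J)] = ~~ [exists w, covered q w && (w \in J)].
Proof.
move=> /idealP id; rewrite negb_exists; apply/forallP/forallP => h w.
  rewrite negb_and; case: (boolP (covered q w)) => //= cw.
  by have /implyP := h w; apply; rewrite /flt covered_fle // covered_neq.
apply/implyP => hw; case: (flt_firstP hw) => z cz lz.
have := h z; rewrite cz /=; apply: contra; exact: id.
Qed.

Lemma toggle_other q J v : v != q -> (v \in toggle q J) = (v \in J).
Proof.
move=> vq; rewrite /toggle.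
case: ifP => _; first by rewrite in_setU1 (negbTE vq).
by case: ifP => _ //; rewrite in_setD1 vq.
Qed.

Lemma toggle_self q J : is_ideal J ->
  (q \in toggle q J) = if q \notin J then [forall w, covered w q ==> (w \in J)]
                       else [exists w, covered q w && (w \in J)].
Proof.
move=> iJ; rewrite /toggle flt_lower // flt_upper //.
case: (boolP (q \in J)) => qJ /=.
  by case: [exists _, _]; rewrite /= ?in_setD1 ?eqxx ?qJ.
by case: [forall _, _]; rewrite /= ?in_setU1 ?eqxx // (negbTE qJ).
Qed.

Lemma toggle_ideal q J : is_ideal J -> is_ideal (toggle q J).
Proof.
move=> iJ; have id := idealP _ iJ.
rewrite /toggle; case: ifP => [/andP [qJ /forallP hq] | _].
  apply/idealP => u v luv; rewrite !in_setU1 => /orP [/eqP vq|vJ].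
    subst v; case: (eqVneq u q) => [-> //|nuq]; rewrite (id u u) ?orbT //; last first.
    by have /implyP := hq u; apply; rewrite /flt nuq luv.
    exact: connect0.
  by rewrite (id u v) ?orbT.
case: ifP => // /andP [qJ /forallP hq].
apply/idealP => u v luv; rewrite !in_setD1 => /andP [vq vJ].
rewrite (id u v) // andbT; apply/eqP => uq; subst u.
by have /implyP := hq v => /(_ _) /negP; apply => //; rewrite /flt eq_sym vq.
Qed.

Lemma toggleK q J : is_ideal J -> toggle q (toggle q J) = J.
Proof.
move=> iJ; apply/setP => v; case: (eqVneq v q) => [->|vq]; last by rewrite !toggle_other.
rewrite toggle_self ?toggle_ideal //.
have tJ := toggle_self q iJ.
have lowin : [forall w, covered w q ==> (w \in toggle q J)] = [forall w, covered w q ==> (w \in J)].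
  apply: eq_forallb => w; case: (boolP (covered w q)) => //= cw.
  by rewrite toggle_other ?(covered_neq cw).
have upin : [exists w, covered q w && (w \in toggle q J)] = [exists w, covered q w && (w \in J)].
  apply: eq_existsb => w; case: (boolP (covered q w)) => //= cw.
  by rewrite toggle_other // eq_sym covered_neq.
rewrite lowin upin.
case: (boolP (q \in J)) => qJ; rewrite qJ /= in tJ.
  case: (boolP (q \in toggle q J)) => qt /=; first by rewrite -tJ.
  apply/forallP => w; apply/implyP => cw.
  exact: (idealP _ iJ) _ _ (covered_fle cw) qJ.
case: (boolP (q \in toggle q J)) => qt /=.
  apply/negbTE; rewrite negb_exists; apply/forallP => w; rewrite negb_and.
  case: (boolP (covered q w)) => //= cw.
  by apply: contra qJ; apply: (idealP _ iJ); apply: covered_fle.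
by apply/negbTE; rewrite -tJ.
Qed.

Definition step (J : {set T}) (q : T) := toggle q J.

Lemma foldl_ideal s J : is_ideal J -> is_ideal (foldl step J s).
Proof. elim: s J => //= q s IH J iJ; apply: IH; exact: toggle_ideal. Qed.

Lemma foldl_inj s I J : is_ideal I -> is_ideal J -> foldl step I s = foldl step J s -> I = J.
Proof.
elim: s I J => //= q s IH I J iI iJ e.
have := IH _ _ (toggle_ideal q iI) (toggle_ideal q iJ) e.
by move/(congr1 (toggle q)); rewrite !toggleK.
Qed.

Lemma foldl_mem s J w : w \notin s -> (w \in foldl step J s) = (w \in J).
Proof.
elim: s J => //= q s IH J; rewrite in_cons negb_or => /andP [wq ws].
by rewrite IH // /step toggle_other.
Qed.

Lemma Pro_ideal I : is_ideal I -> is_ideal (Pro I).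
Proof. exact: foldl_ideal. Qed.

Lemma Pro_inj : {in (@is_ideal alpha) &, injective (@Pro alpha)}.
Proof. move=> I J iI iJ; exact: foldl_inj. Qed.

Lemma pro_local I u : is_ideal I ->
  (u \in Pro I) =
  (let st w := if w < u then w \in Pro I else w \in I in
   if u \notin I then [forall w, covered w u ==> st w]
   else [exists w, covered u w && st w]).
Proof.
move=> iI.
set e := enum T.
have ue : u \in e by rewrite mem_enum.
have ui : index u e = u by rewrite index_enum_ord.
have ce : e = take u e ++ u :: drop u.+1 e.
  have nu : nth u e u = u by rewrite -[X in nth _ _ X]ui nth_index.
  by rewrite -{1}(cat_take_drop u e) (drop_nth u) ?size_enum_ord ?ltn_ord // nu.
have ue2 : uniq (take u e ++ u :: drop u.+1 e) by rewrite -ce enum_uniq.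
set p1 := take u e in ce ue2 *; set p2 := drop u.+1 e in ce ue2 *.
have uP : (u \in Pro I) = (u \in toggle u (foldl step I p1)).
  rewrite /Pro -/e ce foldl_cat /= foldl_mem //.
  by move: ue2; rewrite cat_uniq /= => /and3P [_ _ /andP [] ].
have stE w : w != u -> (w \in foldl step I p1) = (if w < u then w \in Pro I else w \in I).
  move=> wu; case: ifP => wlt.
    have wp1 : w \in p1 by rewrite /p1 in_take ?mem_enum // index_enum_ord.
    have wn : w \notin u :: p2.
      move: ue2; rewrite cat_uniq => /and3P [_ h _].
      by apply/negP => wi; move/hasP: h; apply; exists w.
    by rewrite /Pro -/e ce foldl_cat -/(step) (foldl_mem _ wn).
  rewrite foldl_mem //.
  by rewrite /p1 in_take ?mem_enum // index_enum_ord wlt.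
have uI : (u \in foldl step I p1) = (u \in I).
  by rewrite foldl_mem // /p1 in_take ?mem_enum // index_enum_ord ltnn.
rewrite uP toggle_self; last exact: foldl_ideal.
rewrite uI /=; case: (u \in I) => /=.
  apply: eq_existsb => w; case: (boolP (covered u w)) => //= cw.
  by rewrite stE // eq_sym covered_neq.
apply: eq_forallb => w; case: (boolP (covered w u)) => //= cw.
by rewrite stE // covered_neq.
Qed.

End Toggles.

Lemma mono_form (f : nat -> bool) m :
  (forall l, 0 < l < m -> f l.+1 -> f l) ->
  exists2 K, K <= m & forall l, 0 < l <= m -> f l = (l <= K).
Proof.
elim: m => [|m IH] h; first by exists 0 => // l; lia.
have [K Km hK] : exists2 K, K <= m & forall l, 0 < l <= m -> f l = (l <= K).
  by apply: IH => l hl; apply: h; lia.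
case fm : (f m.+1).
  exists m.+1 => // l hl; have -> : l <= m.+1 by lia.
  have all1 : forall d, d <= m -> f (m.+1 - d).
    elim=> [|d IHd] hd; first by rewrite subn0.
    have := h (m.+1 - d.+1); rewrite subnSK; last lia.
    by apply; [lia | apply: IHd; lia].
  by have := all1 (m.+1 - l); rewrite subKn //; [apply|]; lia.
exists K; first lia.
move=> l hl; case: (ltngtP l m.+1) => hlm.
- by apply: hK; lia.
- lia.
- subst l; rewrite fm; symmetry; apply/negbTE; rewrite -ltnNge; lia.
Qed.

Lemma count_le K a m : count (fun l => l <= K) (iota a m) = minn m (K.+1 - a).
Proof.
elim: m a => [|m IH] a /=; first by rewrite min0n.
rewrite IH; case: (leqP a K) => h /=; lia.
Qed.

Section Chains.
Variables (al j : nat) (o n : nat -> bool).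
Hypothesis hj : 0 < j < al.

Definition cnt (x : nat -> bool) a m := count x (iota a m).

Lemma up_chain_nat :
  (forall l, l < al -> o l.+1 -> o l) ->
  (forall l, 0 < l < al -> n l = if o l then o l.+1 else n l.-1) ->
  (o 1 -> n 0) ->
  al * o j + al * cnt n j (al - j) + (al - j) * cnt o 1 al.-1
  = j * o al + (al - j) * cnt n 1 al.-1 + (al - j) * n 0 + al * cnt o j (al - j).
Proof.
move=> H1 H2 H3.
have [K Kb hK] : exists2 K, K <= al.-1 & forall l, 0 < l <= al.-1 -> o l = (l <= K).
  by apply: mono_form => l hl; apply: H1; lia.
pose K' := if ~~ n 0 then 0 else if o al then al.-1 else if K == 0 then al.-1 else K.-1.
have oal : o al -> K = al.-1.
  move=> oa; have : o al.-1 by apply: (H1 al.-1); [lia | rewrite prednK //; lia].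
  rewrite hK; lia.
have n0K : ~~ n 0 -> K = 0.
  move=> nn0; case: (posnP K) => // Kp.
  have : o 1 = false by apply/negP => /H3; rewrite (negbTE nn0).
  rewrite hK; lia.
have hK' : forall l, 0 < l <= al.-1 -> n l = (l <= K').
  elim=> [|l IH] hl; first lia.
  rewrite (H2 l.+1); last lia.
  rewrite (hK l.+1); last lia.
  have nprev : n l = if l == 0 then n 0 else (l <= K').
    by case: l IH hl => [|l] IH hl //=; rewrite IH //; lia.
  have ol1 : o l.+2 = if l.+2 == al then o al else (l.+2 <= K).
    case: eqP => [<- //|ne]; rewrite (hK l.+2) //; lia.
  rewrite nprev ol1 /K'.
  move: (oal) (n0K); case: (n 0); case: (o al) => /= h1 h2;
    [have := h1 isT | | | have := h2 isT]; try move=> Ke;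
    repeat (case: ifP => ?); try (apply/idP/idP => ?); lia.
have K'b : K' <= al.-1 by rewrite /K'; case: (n 0) => //=; case: (o al) => //=; case: (K == 0) => //=; lia.
rewrite /cnt.
rewrite (@eq_in_count _ o (fun l => l <= K) (iota 1 al.-1)); last by move=> l; rewrite mem_iota => hl; apply: hK; lia.
rewrite (@eq_in_count _ o (fun l => l <= K) (iota j (al - j))); last by move=> l; rewrite mem_iota => hl; apply: hK; lia.
rewrite (@eq_in_count _ n (fun l => l <= K') (iota 1 al.-1)); last by move=> l; rewrite mem_iota => hl; apply: hK'; lia.
rewrite (@eq_in_count _ n (fun l => l <= K') (iota j (al - j))); last by move=> l; rewrite mem_iota => hl; apply: hK'; lia.
rewrite !count_le (hK j); last lia.
have m1 : forall X, X <= al.-1 -> minn al.-1 (X.+1 - 1) = X by move=> X hX; lia.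
have m2 : forall X, X <= al.-1 -> minn (al - j) (X.+1 - j) = X.+1 - j by move=> X hX; lia.
rewrite !m1 // !m2 //.
rewrite /K' in K'b *.
have f1 := oal; have f2 := n0K.
have [m em] : exists m, al = m.+1 by exists al.-1; lia.
have jm : j <= m by lia.
rewrite em /= in f1 K'b Kb *.
case: (boolP (n 0)) f2 => n0 f2 /=.
  case: (boolP (o m.+1)) f1 => oa f1 /=.
    rewrite (f1 isT) jm.
    lia.
  case: eqP => K0.
    rewrite K0 /=; have -> : 1 - j = 0 by lia.
    rewrite !muln0 !addn0 add0n muln1 -mulnSr mulnC; lia.
  have -> : K.-1.+1 = K by lia.
  have e : (m.+1 - j) * K.-1 + (m.+1 - j) * 1 = (m.+1 - j) * K.
    by rewrite muln1 -mulnSr prednK //; lia.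
  rewrite !muln0 !add0n e.
  case: (leqP j K) => jK /=.
    have -> : K.+1 - j = (K - j).+1 by lia.
    rewrite mulnS; lia.
  have -> : K.+1 - j = 0 by lia.
  have -> : K - j = 0 by lia.
  rewrite !muln0; lia.
rewrite (f2 isT) /=; have -> : 1 - j = 0 by lia.
have -> : o m.+1 = false by apply/negP => /f1; lia.
have -> : (j <= 0) = false by lia.
by rewrite !muln0.
Qed.

Lemma count_ge c a m : count (fun l => c <= l) (iota a m) = (a + m) - maxn a c.
Proof.
elim: m a => [|m IH] a /=; first by lia.
rewrite IH; case: (leqP c a) => h /=; lia.
Qed.

Lemma down_chain_nat :
  (forall l, l < al -> o l -> o l.+1) ->
  (forall l, 0 < l < al -> n l = if o l then n l.-1 else o l.+1) ->
  (n 0 -> o 1) ->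
  al * o (al - j) + (al - j) * cnt n 1 al.-1 + al * cnt o 1 (al.-1 - j)
  = al * cnt n 1 (al.-1 - j) + j * n 0 + (al - j) * cnt o 1 al.-1 + (al - j) * o al.
Proof.
move=> H1 H2 H3.
have hm : forall l, 0 < l < al.-1 -> (fun l => o (al - l)) l.+1 -> (fun l => o (al - l)) l.
  move=> l hl /=; have -> : al - l = (al - l.+1).+1 by lia.
  by apply: H1; lia.
have [K Kb hK0] := mono_form hm.
have hK : forall l, 0 < l <= al.-1 -> o l = (al - K <= l).
  move=> l hl; have := hK0 (al - l); rewrite subKn; last lia.
  move=> ->; last lia; lia.
pose K' := if ~~ o al then 0 else if n 0 then al.-1 else if K == al.-1 then 0 else K.+1.
have f1 : ~~ o al -> K = 0.
  move=> na; case: (posnP K) => // Kp.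
  have : o al.-1 = false.
    apply/negP => ob; move: na; have -> // : al = al.-1.+1 by lia.
    by rewrite H1 //; lia.
  rewrite hK; lia.
have f2 : n 0 -> K = al.-1.
  move=> n0; have := H3 n0; rewrite hK; lia.
have K'b : K' <= al.-1 by rewrite /K'; case: (o al) => //=; case: (n 0) => //=; case: eqP; lia.
have hK' : forall l, 0 < l <= al.-1 -> n l = (al - K' <= l).
  elim=> [|l IH] hl; first lia.
  rewrite (H2 l.+1); last lia.
  rewrite (hK l.+1); last lia.
  have nprev : n l = if l == 0 then n 0 else (al - K' <= l).
    by case: l IH hl => [|l] IH hl //=; rewrite IH //; lia.
  have ol1 : o l.+2 = if l.+2 == al then o al else (al - K <= l.+2).
    case: eqP => [<- //|ne]; rewrite (hK l.+2) //; lia.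
  rewrite nprev ol1 /K'.
  move: f1 f2; case: (o al); case: (n 0) => /= g1 g2;
    try (have := g1 isT); try (have := g2 isT); intros;
    repeat (case: ifP => ?); try (apply/idP/idP => ?); lia.
rewrite /cnt.
rewrite (@eq_in_count _ o (fun l => al - K <= l) (iota 1 al.-1)); last by move=> l; rewrite mem_iota => hl; apply: hK; lia.
rewrite (@eq_in_count _ o (fun l => al - K <= l) (iota 1 (al.-1 - j))); last by move=> l; rewrite mem_iota => hl; apply: hK; lia.
rewrite (@eq_in_count _ n (fun l => al - K' <= l) (iota 1 al.-1)); last by move=> l; rewrite mem_iota => hl; apply: hK'; lia.
rewrite (@eq_in_count _ n (fun l => al - K' <= l) (iota 1 (al.-1 - j))); last by move=> l; rewrite mem_iota => hl; apply: hK'; lia.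
rewrite !count_ge (hK (al - j)); last lia.
have m1 : forall X, X <= al.-1 -> 1 + al.-1 - maxn 1 (al - X) = X by move=> X hX; lia.
have m2 : forall X, X <= al.-1 -> 1 + (al.-1 - j) - maxn 1 (al - X) = X - j by move=> X hX; lia.
rewrite !m1 // !m2 //.
have -> : (al - K <= al - j) = (j <= K) by lia.
have [m em] : exists m, al = m.+1 by exists al.-1; lia.
have jm : j <= m by lia.
rewrite /K' in K'b *.
rewrite em /= in f1 f2 K'b Kb *.
case: (boolP (o m.+1)) f1 => oa f1 /=; last first.
  rewrite (f1 isT) /=.
  have -> : n 0 = false by apply/negP => /f2; lia.
  by rewrite !muln0 /= !addn0; case: (leqP j 0) => /=; lia.
case: (boolP (n 0)) f2 => n0 f2 /=.
  rewrite (f2 isT) jm /=; lia.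
case: eqP => Km.
  rewrite Km jm /= ?sub0n ?muln0 ?addn0 ?muln1 ?mul1n.
  by rewrite add0n addnC -mulnSr -mulnSr -subSn // mulnC.
have -> : K.+1 - j = (K - j) + (j <= K) by case: leqP; lia.
rewrite mulnDr; case: (j <= K); rewrite ?muln1 ?muln0 ?mulnS; lia.
Qed.

End Chains.


Definition PsiU (R : realType) al j (x : nat -> bool) : R :=
  (((al - j) * cnt x 1 al.-1)%N%:R - (al * cnt x j (al - j))%N%:R + ((al - j) * x 0)%N%:R)%R.
Definition PsiD (R : realType) al j (x : nat -> bool) : R :=
  ((al * cnt x 1 (al.-1 - j))%N%:R - ((al - j) * cnt x 1 al.-1)%N%:R + (j * x 0)%N%:R)%R.

Lemma up_chain_R (R : realType) al j (o n : nat -> bool) : 0 < j < al ->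
  (forall l, l < al -> o l.+1 -> o l) ->
  (forall l, 0 < l < al -> n l = if o l then o l.+1 else n l.-1) ->
  (o 1 -> n 0) ->
  ((al * o j)%N%:R - (j * o al)%N%:R - ((al - j) * o 0)%N%:R = PsiU R al j n - PsiU R al j o :> R)%R.
Proof.
move=> hj h1 h2 h3; have := up_chain_nat hj h1 h2 h3.
move=> /(congr1 (fun m : nat => (m%:R : R)%R)); rewrite !natrD /PsiU => e; lra.
Qed.

Lemma down_chain_R (R : realType) al j (o n : nat -> bool) : 0 < j < al ->
  (forall l, l < al -> o l -> o l.+1) ->
  (forall l, 0 < l < al -> n l = if o l then n l.-1 else o l.+1) ->
  (n 0 -> o 1) ->
  ((al * o (al - j))%N%:R - (j * o 0)%N%:R - ((al - j) * o al)%N%:R = PsiD R al j n - PsiD R al j o :> R)%R.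
Proof.
move=> hj h1 h2 h3; have := down_chain_nat hj h1 h2 h3.
move=> /(congr1 (fun m : nat => (m%:R : R)%R)); rewrite !natrD /PsiD => e; lra.
Qed.

Section Fence.
Variable alpha : seq nat.
Hypothesis ht2 : 2 <= size alpha.
Hypothesis hpos : all (fun x => 0 < x) alpha.
Hypothesis hh : 2 <= head 0 alpha.
Hypothesis hl : 2 <= last 0 alpha.
Local Notation t := (size alpha).
Local Notation N := (nn alpha).
Local Notation T := ('I_N).
Local Notation aa := (aa alpha).
Local Notation alp := (alp alpha).

Lemma aa0 : aa 0 = 0.
Proof. by rewrite /Defs.aa big_ord0. Qed.

Lemma aaS k : aa k.+1 = aa k + nth 0 alpha k.
Proof. by rewrite /Defs.aa big_ord_recr. Qed.

Lemma nth_pos k : k < t -> 0 < nth 0 alpha k.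
Proof. by move=> kt; move/all_nthP: hpos; apply. Qed.

Lemma aa_mono i k : i <= k -> aa i <= aa k.
Proof.
move=> /subnK <-; elim: (k - i) => [|m IH] //; rewrite addSn aaS; lia.
Qed.

Lemma aa_smono i k : i <= k <= t -> aa i + (k - i) <= aa k.
Proof.
case/andP=> ik kt; move: ik kt; move/subnK => <-; elim: (k - i) => [|m IH] /=.
  by move=> _; rewrite add0n subnn addn0.
rewrite addSn aaS => h; have := nth_pos h; have := IH (ltnW h); lia.
Qed.

Lemma aa_leqE i k : i <= t -> k <= t -> (aa i <= aa k) = (i <= k).
Proof.
move=> it kt; apply/idP/idP; last exact: aa_mono.
apply: contraTT; rewrite -!ltnNge => ki.
have := aa_smono (i:=k) (k:=i); rewrite it (ltnW ki) => /(_ isT); lia.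
Qed.

Lemma aa_ltE i k : i <= t -> k <= t -> (aa i < aa k) = (i < k).
Proof. by move=> it kt; rewrite ltnNge aa_leqE // -ltnNge. Qed.

Lemma aa_eqE i k : i <= t -> k <= t -> (aa i == aa k) = (i == k).
Proof. by move=> it kt; rewrite !eqn_leq !aa_leqE. Qed.

Lemma alpE i : 0 < i -> aa i = aa i.-1 + alp i.
Proof. by case: i => // i _; rewrite aaS. Qed.

Lemma alp1 : 2 <= alp 1.
Proof. by move: hh; case: alpha ht2. Qed.

Lemma alpt : 2 <= alp t.
Proof. by move: hl; rewrite /Defs.alp (last_nth 0); case: alpha ht2. Qed.

Lemma alp_pos i : 0 < i <= t -> 0 < alp i.
Proof. by case: i => // i /= it; apply: nth_pos. Qed.

Lemma NE : (N.+1 = aa t)%N.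
Proof.
rewrite /nn /tt_; have := aa_smono (i:=1) (k:=t); rewrite ltnW //= leqnn => /(_ isT).
have := alpE (isT : 0 < 1); rewrite aa0 add0n; have := alp1; lia.
Qed.

Lemma aa1 : 2 <= aa 1.
Proof. by rewrite alpE // aa0 add0n alp1. Qed.

Lemma aat1 : aa t.-1 + 2 <= aa t.
Proof. rewrite (alpE (i:=t)); last lia. have := alpt; lia. Qed.

Lemma seg_unique i k p : 0 < i <= t -> 0 < k <= t ->
  aa i.-1 <= p < aa i -> aa k.-1 <= p < aa k -> i = k.
Proof.
move=> /andP [i0 it] /andP [k0 kt] /andP [h1 h2] /andP [h3 h4].
case: (ltngtP i k) => // ik.
  have := aa_mono (i:=i) (k:=k.-1); lia.
have := aa_mono (i:=k) (k:=i.-1); lia.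
Qed.

Lemma stepE i p : 0 < i <= t -> aa i.-1 <= p < aa i ->
  upstep alpha p = odd i /\ downstep alpha p = ~~ odd i.
Proof.
move=> hi hp; have it : i < t.+1 by case/andP: hi.
split; apply/existsP/idP.
- case=> k /and4P [k0 h1 h2 ok].
  by rewrite -(@seg_unique k i p) // ?h1 ?h2 // k0 -ltnS ltn_ord.
- move=> oi; exists (Ordinal it) => /=; case/andP: hi => -> _; case/andP: hp => -> ->; by rewrite oi.
- case=> k /and4P [k0 h1 h2 ok].
  by rewrite -(@seg_unique k i p) // ?h1 ?h2 // k0 -ltnS ltn_ord.
- move=> oi; exists (Ordinal it) => /=; case/andP: hi => -> _; case/andP: hp => -> ->; by rewrite oi.
Qed.

Lemma down_not_up p : downstep alpha p -> ~~ upstep alpha p.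
Proof.
case/existsP=> k /and4P [k0 h1 h2 ok].
have hk : 0 < k <= t by rewrite k0 -ltnS ltn_ord.
by case: (stepE hk (p:=p)) => [|-> _] //; rewrite h1 h2.
Qed.


Definition bitP (J : {set T}) (p : nat) : bool := [exists w : T, (w.+1 == p) && (w \in J)].

Lemma bitP_ord J (w : T) : bitP J w.+1 = (w \in J).
Proof.
rewrite /bitP; apply/idP/idP => [/existsP [w' /andP [/eqP e h]]|h]; last by apply/existsP; exists w; rewrite eqxx.
by have -> : w = w' by apply/val_inj; case: e.
Qed.

Lemma bitP_out J p : ~~ (0 < p <= N) -> bitP J p = false.
Proof.
move=> h; rewrite /bitP; apply/negbTE/negP => /existsP [w /andP [/eqP e _]]; move: h; rewrite -e.
by rewrite ltn_ord.
Qed.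

Lemma sum_bit (R : realType) J (P : pred T) p :
  (forall u, P u = (u.+1 == p)) ->
  (\sum_(u | P u) chi R u J = (bitP J p)%:R)%R.
Proof.
move=> hP; case: (boolP (bitP J p)) => [hb | nb].
  move: (hb); rewrite /bitP => /existsP [w /andP [/eqP wp wJ]].
  rewrite (big_pred1 w); first by rewrite /chi wJ.
  move=> u; rewrite hP /= -wp; apply/eqP/eqP => [[]|->] //; exact: val_inj.
rewrite big1 // => u; rewrite hP => /eqP up; rewrite /chi.
by move: nb; rewrite -up bitP_ord => /negbTE ->.
Qed.

Lemma inS_char i (v : T) : 0 < i <= t -> inS i v = (aa i.-1 <= v.+1 <= aa i).
Proof.
move=> hi; have vN := ltn_ord v; have := NE; rewrite /inS /tt_.
case: eqP => [-> /=|_]; first by rewrite aa0.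
case: eqP => [-> /=|_] //; lia.
Qed.

Lemma ex_shared (P : nat -> bool) i (v : T) : 0 < i <= t -> aa i.-1 <= v.+1 <= aa i ->
  [exists k : 'I_t, [&& 0 < (k : nat), v.+1 == aa k & P k]]
  = ((v.+1 == aa i) && P i) || ((v.+1 == aa i.-1) && P i.-1).
Proof.
move=> hi hv; have vN := ltn_ord v; have := NE => NE'.
apply/existsP/idP.
  case=> k /and3P [k0 /eqP e pk].
  have kt := ltn_ord k.
  have h1 : i.-1 <= k by rewrite -aa_leqE; lia.
  have h2 : k <= i by rewrite -aa_leqE; lia.
  have [ek|ek] : k = i :> nat \/ k = i.-1 :> nat by lia.
    by rewrite -ek e eqxx pk.
  by rewrite -ek e eqxx pk orbT.
case/orP => /andP [/eqP e pk].
  have it : i < t by rewrite -(aa_ltE (i:=i) (k:=t)) //; lia.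
  by exists (Ordinal it); rewrite /= e eqxx pk andbT; lia.
have i0 : 0 < i.-1 by case: (posnP i.-1) e => // ->; rewrite aa0.
have it : i.-1 < t by lia.
by exists (Ordinal it); rewrite /= e eqxx pk i0.
Qed.

Lemma peak_char i (v : T) : 0 < i <= t ->
  (inS i v && is_peak v) = ((v.+1 == aa i) && odd i) || ((v.+1 == aa i.-1) && odd i.-1).
Proof.
move=> hi; rewrite inS_char //; case: (boolP (aa i.-1 <= v.+1 <= aa i)) => hv /=.
  by rewrite /is_peak (ex_shared odd hi hv).
apply/esym/negbTE; apply: contra hv => /orP [] /andP [/eqP -> _];
  have := aa_mono (i:=i.-1) (k:=i); lia.
Qed.

Lemma valley_char i (v : T) : 0 < i <= t ->
  (inS i v && is_valley v) = ((v.+1 == aa i) && ~~ odd i) || ((v.+1 == aa i.-1) && ~~ odd i.-1).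
Proof.
move=> hi; rewrite inS_char //; case: (boolP (aa i.-1 <= v.+1 <= aa i)) => hv /=.
  by rewrite /is_valley (ex_shared (fun k => ~~ odd k) hi hv).
apply/esym/negbTE; apply: contra hv => /orP [] /andP [/eqP -> _];
  have := aa_mono (i:=i.-1) (k:=i); lia.
Qed.

Lemma breve_char i (v : T) : 0 < i <= t -> inbreveS i v = (aa i.-1 < v.+1 < aa i).
Proof.
move=> hi; rewrite /inbreveS inS_char //.
case: (boolP (aa i.-1 <= v.+1 <= aa i)) => hv /=; last by apply/esym/negbTE; apply: contra hv; lia.
have -> : is_shared v = [exists k : 'I_t, [&& 0 < (k : nat), v.+1 == aa k & true]].
  by apply: eq_existsb => k; rewrite andbT.
rewrite (ex_shared predT hi hv) /= !andbT; lia.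
Qed.


Definition ht (q : nat) : int := (\sum_(k < q) (if upstep alpha k.+1 then 1 else -1))%R.

Lemma htS q : ht q.+1 = (ht q + (if upstep alpha q.+1 then 1 else -1))%R.
Proof. by rewrite /ht big_ord_recr. Qed.

Lemma ht_cov (u v : T) : covered u v -> ht v = (ht u + 1)%R.
Proof.
rewrite /covered => /orP [] /andP [/eqP e s].
  by rewrite e htS s.
rewrite e htS (negbTE (down_not_up s)); by rewrite -addrA addNr addr0.
Qed.

Lemma ht_path (u : T) (p : seq T) : path (@covered alpha) u p -> ht (last u p) = (ht u + (size p)%:Z)%R.
Proof.
elim: p u => [|y p IH] u /=; first by rewrite addr0.
case/andP => c pth; rewrite IH // (ht_cov c) -addrA; congr (_ + _)%R.
Qed.

Lemma flt_ht (u v : T) : flt u v -> (ht u < ht v)%R.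
Proof.
case/andP => nuv /connectP [p pth e]; rewrite e (ht_path pth).
case: p pth e => [|y p] _ e; first by rewrite e eqxx in nuv.
by rewrite ltrDl.
Qed.

Lemma ht_up a d : (forall k, a <= k < a + d -> upstep alpha k.+1) ->
  ht (a + d) = (ht a + d%:Z)%R.
Proof.
elim: d => [|d IH] h; first by rewrite addn0 addr0.
rewrite addnS htS h; last lia.
rewrite IH; last by move=> k hk; apply: h; lia.
by rewrite -addrA -addn1 PoszD.
Qed.

Lemma ht_down a d : (forall k, a <= k < a + d -> ~~ upstep alpha k.+1) ->
  ht (a + d) = (ht a - d%:Z)%R.
Proof.
elim: d => [|d IH] h; first by rewrite addn0 subr0.
rewrite addnS htS (negbTE (h _ _)); last lia.
rewrite IH; last by move=> k hk; apply: h; lia.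
by rewrite -addrA -opprD -addn1 PoszD.
Qed.

Lemma up_fle (v u : T) : v <= u -> (forall k, v <= k < u -> upstep alpha k.+1) -> fle v u.
Proof.
move=> vu; have [d ed] : exists d, (u : nat) = v + d by exists (u - v); lia.
elim: d u vu ed => [|d IH] u vu ed h.
  have uv : u = v by apply: val_inj => /=; lia.
  by rewrite uv; apply: connect0.
have wN : v + d < N by have := ltn_ord u; lia.
pose w : T := Ordinal wN.
apply: (connect_trans (y:=w)).
  apply: IH => //=; [lia | move=> k hk; apply: h; lia].
apply: connect1; rewrite /covered /= ed addnS eqxx /=; apply/orP; left; apply: h; lia.
Qed.

Lemma down_fle (u v : T) : u <= v -> (forall k, u <= k < v -> downstep alpha k.+1) -> fle v u.
Proof.
move=> uv; have [d ed] : exists d, (v : nat) = u + d by exists (v - u); lia.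
elim: d v uv ed => [|d IH] v uv ed h.
  have e2 : v = u by apply: val_inj => /=; lia.
  by rewrite e2; apply: connect0.
have wN : u + d < N by have := ltn_ord v; lia.
pose w : T := Ordinal wN.
apply: (connect_trans (y:=w)); last first.
  apply: IH => //=; [lia | move=> k hk; apply: h; lia].
apply: connect1; rewrite /covered /= ed addnS eqxx /= orbC; apply/orP; left; apply: h; lia.
Qed.

Lemma flt_seg_odd i (u v : T) : 0 < i <= t -> odd i -> inbreveS i u -> inbreveS i v ->
  flt v u = (v < u).
Proof.
move=> hi oi; rewrite !breve_char // => hu hv.
have stp : forall k, aa i.-1 <= k < aa i -> upstep alpha k = true.
  by move=> k hk; case: (stepE hi hk) => -> _.
case: (ltnP v u) => vu.
  rewrite /flt; apply/andP; split; first by rewrite -val_eqE /= neq_ltn vu.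
  apply: up_fle; [lia | move=> k hk; apply: stp; lia].
have e : ht (u + (v - u)) = (ht u + (v - u)%:Z)%R by apply: ht_up => k hk; apply: stp; lia.
rewrite subnKC // in e.
apply/negP => /flt_ht; rewrite e; lia.
Qed.

Lemma flt_seg_even i (u v : T) : 0 < i <= t -> ~~ odd i -> inbreveS i u -> inbreveS i v ->
  flt v u = (u < v).
Proof.
move=> hi oi; rewrite !breve_char // => hu hv.
have stp : forall k, aa i.-1 <= k < aa i -> downstep alpha k = true.
  by move=> k hk; case: (stepE hi hk) => _ ->.
case: (ltnP u v) => uv.
  rewrite /flt; apply/andP; split; first by rewrite -val_eqE /= neq_ltn uv orbT.
  apply: down_fle; [lia | move=> k hk; apply: stp; lia].
have e : ht (v + (u - v)) = (ht v - (u - v)%:Z)%R.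
  by apply: ht_down => k hk; apply: down_not_up; apply: stp; lia.
rewrite subnKC // in e.
apply/negP => /flt_ht; rewrite e; lia.
Qed.

Lemma card_int a b : #|[set v : T | a <= v < b]| = minn b N - a.
Proof.
rewrite -sum1dep_card -(big_mkord (fun k => a <= k < b) (fun _ => 1)) big_mkcond /=.
elim: N => [|m IH]; first by rewrite big_geq //; lia.
rewrite big_nat_recr //= IH; case: ifP => h; lia.
Qed.

Lemma chi_ij_odd (R : realType) i j I : 0 < i <= t -> odd i -> 0 < j < alp i ->
  chi_ij R i j I = (bitP I (aa i.-1 + j))%:R%R.
Proof.
move=> hi oi hj; rewrite /chi_ij; apply: sum_bit => u.
have ai := alpE (i:=i); move: ai; case/andP: (hi) => -> _ ai; have uN := ltn_ord u.
case: (boolP (inbreveS i u)) => hu /=.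
  have -> : [set v | inbreveS i v & flt v u] = [set v : T | aa i.-1 <= v < u].
    apply/setP => v; rewrite !inE.
    case: (boolP (inbreveS i v)) => hv /=.
      rewrite (flt_seg_odd hi oi hu hv); move: hv hu; rewrite !breve_char // => hv hu.
      apply/idP/idP => ?; lia.
    move: hv hu; rewrite !breve_char // => hv hu; apply/esym/negP => ?; lia.
  rewrite card_int; move: hu; rewrite breve_char // => hu; apply/idP/idP => /eqP ?; apply/eqP; lia.
move: hu; rewrite breve_char // => hu; apply/esym/negP => /eqP ?; lia.
Qed.

Lemma chi_ij_even (R : realType) i j I : 0 < i <= t -> ~~ odd i -> 0 < j < alp i ->
  chi_ij R i j I = (bitP I (aa i.-1 + (alp i - j)))%:R%R.
Proof.
move=> hi oi hj; rewrite /chi_ij; apply: sum_bit => u.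
have ai := alpE (i:=i); move: ai; case/andP: (hi) => -> _ ai; have uN := ltn_ord u.
have aN : aa i <= N.+1 by rewrite NE aa_mono //; case/andP: hi.
case: (boolP (inbreveS i u)) => hu /=.
  have -> : [set v | inbreveS i v & flt v u] = [set v : T | u.+1 <= v < (aa i).-1].
    apply/setP => v; rewrite !inE.
    case: (boolP (inbreveS i v)) => hv /=.
      rewrite (flt_seg_even hi oi hu hv); move: hv hu; rewrite !breve_char // => hv hu.
      apply/idP/idP => ?; lia.
    move: hv hu; rewrite !breve_char // => hv hu; apply/esym/negP => ?; lia.
  rewrite card_int; move: hu; rewrite breve_char // => hu; apply/idP/idP => /eqP ?; apply/eqP; lia.
move: hu; rewrite breve_char // => hu; apply/esym/negP => /eqP ?; lia.
Qed.

Lemma odd_predn i : 0 < i -> odd i.-1 = ~~ odd i.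
Proof. by case: i => //= i _; rewrite negbK. Qed.

Lemma chi_peak_odd (R : realType) i I : 0 < i <= t -> odd i ->
  chi_peak R i I = (bitP I (aa i))%:R%R.
Proof.
move=> hi oi; apply: sum_bit => u; rewrite peak_char // odd_predn; last by case/andP: hi.
by rewrite oi /= andbF orbF andbT.
Qed.

Lemma chi_valley_odd (R : realType) i I : 0 < i <= t -> odd i ->
  chi_valley R i I = (bitP I (aa i.-1))%:R%R.
Proof.
move=> hi oi; apply: sum_bit => u; rewrite valley_char // odd_predn; last by case/andP: hi.
by rewrite oi /= andbF andbT.
Qed.

Lemma chi_peak_even (R : realType) i I : 0 < i <= t -> ~~ odd i ->
  chi_peak R i I = (bitP I (aa i.-1))%:R%R.
Proof.
move=> hi oi; apply: sum_bit => u; rewrite peak_char // odd_predn; last by case/andP: hi.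
by rewrite (negbTE oi) /= andbF andbT.
Qed.

Lemma chi_valley_even (R : realType) i I : 0 < i <= t -> ~~ odd i ->
  chi_valley R i I = (bitP I (aa i))%:R%R.
Proof.
move=> hi oi; apply: sum_bit => u; rewrite valley_char // odd_predn; last by case/andP: hi.
by rewrite oi /= andbF orbF andbT.
Qed.


Lemma pro_pos I (q : T) : is_ideal I ->
  (q \in Pro I) =
  if q \notin I then ((0 < q) && upstep alpha q ==> bitP (Pro I) q) &&
                     (downstep alpha q.+1 ==> (q.+1 < N) ==> bitP I q.+2)
  else (upstep alpha q.+1 && bitP I q.+2) || ((0 < q) && downstep alpha q && bitP (Pro I) q).
Proof.
move=> iI; rewrite pro_local //=; case: (q \in I) => /=.
  apply/existsP/idP.
    case=> w /andP [c st]; case/orP: c => /andP [/eqP e s].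
      rewrite e ltnNge leqnSn /= in st; apply/orP; left.
      by rewrite s -e bitP_ord.
    have wq : w < q by rewrite e.
    rewrite wq in st; apply/orP; right; rewrite e s /=.
    by rewrite bitP_ord.
  case/orP.
    case/andP => s /existsP [w /andP [/eqP e wI]]; exists w.
    have e' : (w : nat) = q.+1 by case: e.
    apply/andP; split; last by rewrite ltnNge e' leqnSn.
    by apply/orP; left; rewrite s andbT; apply/eqP.
  case/andP => /andP [q0 s] /existsP [w /andP [/eqP e wI]]; exists w.
  have wq : w < q by rewrite -e.
  apply/andP; split; last by rewrite wq.
  by apply/orP; right; rewrite e s eqxx.
apply/forallP/andP.
  move=> h; split.
    apply/implyP => /andP [q0 s].
    have wN : q.-1 < N by have := ltn_ord q; lia.
    pose w : T := Ordinal wN.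
    have := h w; rewrite /covered /= prednK // eqxx s /= leqnn => hw.
    have e : (nat_of_ord q) = w.+1 by rewrite /= prednK.
    by rewrite e bitP_ord.
  apply/implyP => s; apply/implyP => qN.
  pose w : T := Ordinal qN.
  have := h w; rewrite /covered /= eqxx s /= orbT => /implyP /(_ isT).
  by rewrite ltnNge leqnSn /= -(bitP_ord I w).
case=> /implyP h1 /implyP h2 w; apply/implyP; rewrite /covered.
case/orP => /andP [/eqP e s].
  have wq : w < q by rewrite e.
  rewrite wq -bitP_ord -e; apply: h1; rewrite e s andbT //.
rewrite e ltnNge leqnSn /= -bitP_ord e.
have qN : q.+1 < N by rewrite -e ltn_ord.
by move: (h2 s) => /implyP /(_ qN).
Qed.

Lemma ideal_up I p : is_ideal I -> 0 < p -> upstep alpha p -> bitP I p.+1 -> bitP I p.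
Proof.
move=> iI p0 s /existsP [w /andP [/eqP e wI]].
have wN : p.-1 < N by have := ltn_ord w; lia.
pose v : T := Ordinal wN.
have ev : (nat_of_ord v).+1 = p by rewrite /= prednK.
rewrite -ev bitP_ord; apply: (idealP _ iI) wI; apply: covered_fle.
rewrite /covered; apply/orP; left; rewrite ev s andbT; apply/eqP; rewrite /=; lia.
Qed.

Lemma ideal_down I p : is_ideal I -> 0 < p -> p < N -> downstep alpha p -> bitP I p -> bitP I p.+1.
Proof.
move=> iI p0 pN s /existsP [w /andP [/eqP e wI]].
pose v : T := Ordinal pN.
have ev : (nat_of_ord v).+1 = p.+1 by [].
rewrite -ev bitP_ord; apply: (idealP _ iI) wI; apply: covered_fle.
rewrite /covered; apply/orP; right; rewrite e s andbT; apply/eqP; rewrite /=; lia.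
Qed.


Lemma exT p : 0 < p <= N -> exists q : T, (nat_of_ord q).+1 = p.
Proof.
move=> hp; have qN : p.-1 < N by lia.
by exists (Ordinal qN) => /=; lia.
Qed.

Definition oc i (J : {set T}) (l : nat) : bool :=
  if ((i == 1) && (l == 0)) || [&& i == t, ~~ odd i & l == alp i] then true
  else bitP J (aa i.-1 + l).

Lemma up_hyps i I : 0 < i <= t -> odd i -> is_ideal I ->
  [/\ (forall l, l < alp i -> oc i I l.+1 -> oc i I l),
      (forall l, 0 < l < alp i -> oc i (Pro I) l =
          if oc i I l then oc i I l.+1 else oc i (Pro I) l.-1) &
      (oc i I 1 -> oc i (Pro I) 0)].
Proof.
move=> hi oi iI.
have ai := alpE (i:=i); move: ai; case/andP: (hi) => i0 it ai.
have aN : aa i <= N.+1 by rewrite NE aa_mono.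
have al0 := alp_pos hi.
have b2 : i != 1 -> 2 <= aa i.-1.
  by move=> i1; have := aa1; have := aa_mono (i:=1) (k:=i.-1); lia.
have stp : forall k, aa i.-1 <= k < aa i -> upstep alpha k && ~~ downstep alpha k.
  by move=> k hk; case: (stepE hi hk) => -> ->; rewrite oi.
have nov : forall J l, l != 0 -> oc i J l = bitP J (aa i.-1 + l).
  by move=> J l l0; rewrite /oc oi andbF orbF (negbTE l0) andbF.
split.
- move=> l hlt; rewrite nov //; case: (eqVneq l 0) => [->|l0].
    rewrite /oc eqxx andbT oi andbF orbF; case: ifP => // i1.
    rewrite addn0 addn1; apply: ideal_up => //; first by have := b2 (negbT i1); lia.
    by case/andP: (stp (aa i.-1) ltac:(lia)).
  rewrite nov // addnS; apply: ideal_up => //; first lia.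
  by case/andP: (stp (aa i.-1 + l) ltac:(lia)).
- move=> l hlt; have l0 : l != 0 by lia.
  rewrite (nov (Pro I) l l0) (nov I l l0) (nov I l.+1 isT).
  have [q eq] := exT (p := aa i.-1 + l) ltac:(lia).
  rewrite -eq !bitP_ord pro_pos // addnS -eq.
  have [sq1 sq2] : upstep alpha q.+1 /\ downstep alpha q.+1 = false.
    by rewrite eq; case/andP: (stp (aa i.-1 + l) ltac:(lia)) => -> /negbTE.
  rewrite sq1 sq2 /= andbT.
  case: (boolP ((i == 1) && (l == 1))) => [/andP [/eqP i1 /eqP l1] | nil1].
    have q0 : nat_of_ord q = 0 by move: eq; rewrite i1 l1 /= aa0; lia.
    rewrite q0 /= /oc l1 i1 /=.
    by case: (q \in I); rewrite ?orbF.
  have q0 : 0 < q by move: nil1 eq; case: (eqVneq i 1) => [i1|/b2]; rewrite ?i1 ?aa0 /=; lia.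
  have [sq3 sq4] : upstep alpha q /\ downstep alpha q = false.
    have := stp q ltac:(lia); by case/andP => -> /negbTE.
  rewrite q0 sq3 sq4 /= ?andbF ?orbF.
  have -> : oc i (Pro I) l.-1 = bitP (Pro I) q.
    rewrite /oc oi andbF orbF.
    case: ifP => [/andP [/eqP i1 /eqP l1]|_]; first by move: nil1; rewrite i1 eqxx /=; lia.
    by have -> : aa i.-1 + l.-1 = q by lia.
  by case: (q \in I).
- case: (eqVneq i 1) => [i1|i1]; first by rewrite /oc i1 eqxx.
  have -> : oc i (Pro I) 0 = bitP (Pro I) (aa i.-1) by rewrite /oc (negbTE i1) oi /= andbF addn0.
  rewrite (nov I 1 isT) => h.
  have [q eq] := exT (p := aa i.-1) ltac:(have := b2 i1; lia).
  rewrite -eq bitP_ord pro_pos //.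
  have qI : q \in I.
    rewrite -bitP_ord eq; apply: ideal_up => //; first by have := b2 i1; lia.
    - by case/andP: (stp (aa i.-1) ltac:(lia)).
    - by rewrite -addn1.
  rewrite qI /= eq; case/andP: (stp (aa i.-1) ltac:(lia)) => -> _.
  by rewrite /= -addn1 h.
Qed.


Lemma down_hyps i I : 0 < i <= t -> ~~ odd i -> 1 < alp i -> is_ideal I ->
  [/\ (forall l, l < alp i -> oc i I l -> oc i I l.+1),
      (forall l, 0 < l < alp i -> oc i (Pro I) l =
          if oc i I l then oc i (Pro I) l.-1 else oc i I l.+1) &
      (oc i (Pro I) 0 -> oc i I 1)].
Proof.
move=> hi oi al2 iI.
have ai := alpE (i:=i); move: ai; case/andP: (hi) => i0 it ai.
have aN : aa i <= N.+1 by rewrite NE aa_mono.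
have i1 : i != 1 by apply: contraNneq oi => ->.
have b2 : 2 <= aa i.-1.
  have i2 : 2 <= i by move: i1 i0 oi; case: (i) => [|[|k]] //.
  by have := aa1; have := aa_mono (i:=1) (k:=i.-1); lia.
have ait : i < t -> aa i + 2 <= N.+1.
  by move=> ilt; have := aat1; have := aa_mono (i:=i) (k:=t.-1); rewrite NE; lia.
have stp : forall k, aa i.-1 <= k < aa i -> ~~ upstep alpha k && downstep alpha k.
  by move=> k hk; case: (stepE hi hk) => -> ->; rewrite oi.
have nov : forall J l, l != alp i -> oc i J l = bitP J (aa i.-1 + l).
  by move=> J l l0; rewrite /oc (negbTE i1) (negbTE l0) /= !andbF.
have ovr : forall J l, oc i J l = if (i == t) && (l == alp i) then true else bitP J (aa i.-1 + l).
  by move=> J l; rewrite /oc (negbTE i1) oi /=.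
split.
- move=> l hlt; rewrite (nov I l) ?(ovr I l.+1); last lia.
  case: ifP => // /negbT hn.
  have pN : aa i.-1 + l < N.
    case: (ltnP i t) => ilt; first by have := ait ilt; lia.
    have it' : i = t by lia.
    subst i; have := NE; move: hn; rewrite eqxx /=; lia.
  rewrite addnS; apply: ideal_down => //; first lia.
  by case/andP: (stp (aa i.-1 + l) ltac:(lia)).
- move=> l hlt; have l0 : l != alp i by lia.
  have l1 : l.-1 != alp i by lia.
  rewrite (nov (Pro I) l l0) (nov I l l0) (nov (Pro I) l.-1 l1) (ovr I l.+1).
  have [q eq] := exT (p := aa i.-1 + l) ltac:(lia).
  rewrite -eq !bitP_ord pro_pos //.
  have q0 : 0 < q by lia.
  have [sq1 sq2] : upstep alpha q.+1 = false /\ downstep alpha q.+1.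
    by rewrite eq; case/andP: (stp (aa i.-1 + l) ltac:(lia)) => /negbTE -> ->.
  have [sq3 sq4] : upstep alpha q = false /\ downstep alpha q.
    by case/andP: (stp q ltac:(lia)) => /negbTE -> ->.
  have -> : aa i.-1 + l.-1 = q by lia.
  rewrite addnS -eq sq1 sq2 sq3 sq4 q0 /=.
  case: (q \in I) => //=.
  case: ifP => [/andP [/eqP it' /eqP l1']|/negbT hn].
    have -> : q.+1 < N = false by subst i; have := NE; lia.
    by [].
  have -> // : q.+1 < N.
  case: (ltnP i t) => ilt; first by have := ait ilt; lia.
  have it' : i = t by lia.
  subst i; have := NE; move: hn; rewrite eqxx /=; lia.
- have al0 : 0 != alp i by lia.
  have al1 : 1 != alp i by lia.
  rewrite (nov (Pro I) 0 al0) (nov I 1 al1) addn0.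
  have [q eq] := exT (p := aa i.-1) ltac:(lia).
  rewrite -eq bitP_ord pro_pos //.
  have [_ sb] : ~~ upstep alpha q.+1 /\ downstep alpha q.+1.
    by rewrite eq; case/andP: (stp (aa i.-1) ltac:(lia)) => -> ->.
  have qN : q.+1 < N by have := NE; lia.
  case: (boolP (q \in I)) => qI /=.
    move=> _; rewrite addn1; apply: ideal_down => //; try lia; by rewrite bitP_ord.
  by case/andP => _; rewrite sb qN /= addn1.
Qed.


Lemma gen_odd (R : realType) i j I : 0 < i <= t -> odd i -> 0 < j < alp i -> is_ideal I ->
  gen R i j I = ((if i == 1 then (alp i - j)%N%:R else 0) +
                 PsiU R (alp i) j (oc i (Pro I)) - PsiU R (alp i) j (oc i I))%R.
Proof.
move=> hi oi hj iI; case: (up_hyps hi oi iI) => h1 h2 h3.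
have := up_chain_R R hj h1 h2 h3.
rewrite /gen chi_ij_odd // chi_peak_odd // chi_valley_odd // => e.
rewrite -[in RHS]addrA -e.
have nz : (j == 0) = false by lia.
have nz' : (alp i == 0) = false by have := alp_pos hi; lia.
have o1 : oc i I j = bitP I (aa i.-1 + j) by rewrite /oc nz oi /= !andbF.
have o2 : oc i I (alp i) = bitP I (aa i).
  by rewrite /oc nz' oi /= !andbF -alpE //; case/andP: hi.
have o3 : oc i I 0 = if i == 1 then true else bitP I (aa i.-1).
  by rewrite /oc eqxx andbT oi /= !andbF orbF addn0.
rewrite o1 o2 o3 !natrM; case: (eqVneq i 1) => [i1|i1].
  rewrite i1 /= aa0 (bitP_out I (p:=0)) //=.
  lra.
by rewrite add0r.
Qed.

Lemma gen_even (R : realType) i j I : 0 < i <= t -> ~~ odd i -> 0 < j < alp i -> is_ideal I ->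
  gen R i j I = ((if i == t then (alp i - j)%N%:R else 0) +
                 PsiD R (alp i) j (oc i (Pro I)) - PsiD R (alp i) j (oc i I))%R.
Proof.
move=> hi oi hj iI; have al2 : 1 < alp i by lia.
case: (down_hyps hi oi al2 iI) => h1 h2 h3.
have := down_chain_R R hj h1 h2 h3.
rewrite /gen chi_ij_even // chi_peak_even // chi_valley_even // => e.
rewrite -[in RHS]addrA -e.
have i1 : (i == 1) = false by apply/negbTE; apply: contraNneq oi => ->.
have o1 : oc i I (alp i - j) = bitP I (aa i.-1 + (alp i - j)).
  have nz : (alp i - j == alp i) = false by lia.
  by rewrite /oc i1 nz /= !andbF.
have o2 : oc i I 0 = bitP I (aa i.-1).
  have nz : (0 == alp i) = false by lia.
  by rewrite /oc i1 nz /= !andbF addn0.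
have o3 : oc i I (alp i) = if i == t then true else bitP I (aa i).
  rewrite /oc i1 oi eqxx /= andbT -alpE //; by case/andP: hi.
rewrite o1 o2 o3 !natrM; case: (eqVneq i t) => [it|it].
  have -> : bitP I (aa i) = false by apply: bitP_out; rewrite it -NE; lia.
  rewrite (_ : (false%:R : R) = 0)%R // (_ : (true%:R : R) = 1)%R //; lra.
by rewrite add0r.
Qed.

Section Final.
Variables (R : realType) (c : nat -> nat -> R).

Definition Cst i j : R :=
  if odd i then (if i == 1 then (alp i - j)%N%:R else 0)%R
  else (if i == t then (alp i - j)%N%:R else 0)%R.
Definition Psi i j (J : {set T}) : R :=
  if odd i then PsiU R (alp i) j (oc i J) else PsiD R (alp i) j (oc i J).
Definition Gpot (J : {set T}) : R :=
  (\sum_(1 <= i < t.+1) \sum_(1 <= j < (alp i).-1.+1) c i j * Psi i j J)%R.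
Definition Ctot : R :=
  (\sum_(1 <= i < t.+1) \sum_(1 <= j < (alp i).-1.+1) c i j * Cst i j)%R.

Lemma gen_cob i j I : 0 < i <= t -> 0 < j < alp i -> is_ideal I ->
  gen R i j I = (Cst i j + Psi i j (Pro I) - Psi i j I)%R.
Proof.
move=> hi hj iI; rewrite /Cst /Psi; case: (boolP (odd i)) => oi.
  exact: gen_odd.
exact: gen_even.
Qed.

Lemma span_cob I : is_ideal I -> span_stat c I = (Ctot + Gpot (Pro I) - Gpot I)%R.
Proof.
move=> iI; rewrite /span_stat /Ctot /Gpot /tt_.
rewrite -big_split -sumrB /=; apply: eq_big_nat => i hi.
rewrite -big_split -sumrB /=; apply: eq_big_nat => j hj.
have hi' : 0 < i <= t by lia.
have := alp_pos hi'; move=> al0.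
rewrite gen_cob //; last lia.
by rewrite mulrBr mulrDr.
Qed.

End Final.
End Fence.

Theorem theorem7p5 (R : realType) (alpha : seq nat) (c : nat -> nat -> R) :
  2 <= size alpha ->
  all (fun x => 0 < x) alpha ->
  2 <= head 0 alpha ->
  2 <= last 0 alpha ->
  homomesic (is_ideal (alpha:=alpha)) (Pro (alpha:=alpha)) (span_stat c).
Proof.
move=> h1 h2 h3 h4.
apply: (@cobound_homomesic _ R _ _ (span_stat c) (Gpot c) (Ctot alpha c)).
- move=> I; exact: Pro_ideal.
- exact: Pro_inj.
- move=> I iI; exact: (span_cob h1 h2 h3 h4).
Qed.
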